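(* For every set of names $\rho$ and processes $P,Q$: if $\rho\vdash P$ and $P\equiv Q$ then $\rho\vdash Q$.
   Context: Let $\mathcal N$ be a countable set of names. Processes are generated by $P,Q ::= 0 \mid P\mid Q \mid (\nu a)P \mid (a)P \mid \alpha.P$, where $(\nu a)P$ is name restriction (binding $a$), $(a)P$ is the authorization scope ($a$ not bound), and prefixes are $\alpha ::= \overline{a}\langle b\rangle$ (output) $\mid a(x)$ (input, binding $x$) $\mid \overline{a}\langle\!\langle b\rangle\!\rangle$ (send authorization for $b$ on $a$) $\mid a\langle\!\langle b\rangle\!\rangle$ (receive authorization for $b$ on $a$; $b$ not bound). Free names: $\mathrm{fn}(0)=\emptyset$, $\mathrm{fn}(P\mid Q)=\mathrm{fn}(P)\cup\mathrm{fn}(Q)$, $\mathrm{fn}((\nu a)P)=\mathrm{fn}(P)\setminus\{a\}$, $\mathrm{fn}((a)P)=\{a\}\cup\mathrm{fn}(P)$, $\mathrm{fn}(\overline{a}\langle b\rangle.P)=\mathrm{fn}(\overline{a}\langle\!\langle b\rangle\!\rangle.P)=\mathrm{fn}(a\langle\!\langle b\rangle\!\rangle.P)=\{a,b\}\cup\mathrm{fn}(P)$, $\mathrm{fn}(a(x).P)=\{a\}\cup(\mathrm{fn}(P)\setminus\{x\})$. Structural congruence $\equiv$ is the least congruence on processes satisfying: $P\mid 0\equiv P$; $P\mid Q\equiv Q\mid P$; $(P\mid Q)\mid R\equiv P\mid(Q\mid R)$; $(\nu a)0\equiv 0$; $(\nu a)(\nu b)P\equiv(\nu b)(\nu a)P$;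 $P\mid(\nu a)Q\equiv(\nu a)(P\mid Q)$ if $a\notin\mathrm{fn}(P)$; $P\equiv Q$ whenever $P,Q$ are $\alpha$-convertible; $(a)(b)P\equiv(b)(a)P$; $(a)0\equiv 0$; $(a)(P\mid Q)\equiv(a)P\mid(a)Q$; $(a)(\nu b)P\equiv(\nu b)(a)P$ if $a\neq b$. The typing judgment $\rho\vdash P$ ($\rho$ a set of names) is the least relation closed under the rules: $\emptyset\vdash 0$; if $\rho_1\vdash P$ and $\rho_2\vdash Q$ then $\rho_1\cup\rho_2\vdash P\mid Q$; if $\rho\vdash P$ and $a\notin\rho$ then $\rho\vdash(\nu a)P$; if $\rho\vdash P$ then $\rho\setminus\{a\}\vdash(a)P$; if $\rho\vdash P$ then $\rho\cup\{a\}\vdash\overline{a}\langle b\rangle.P$; if $\rho\vdash P$ and $x\notin\rho$ then $\rho\cup\{a\}\vdash a(x).P$; if $\rho\vdash P$ and $b\notin\rho$ then $\rho\cup\{a,b\}\vdash\overline{a}\langle\!\langle b\rangle\!\rangle.P$; if $\rho\vdash P$ then $(\rho\setminus\{b\})\cup\{a\}\vdash a\langle\!\langle b\rangle\!\rangle.P$. *)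

(* Defs.v *)
From HB Require Import structures.
From mathcomp Require Import all_boot.
From mathcomp Require Import finmap.
Set Implicit Arguments. Unset Strict Implicit. Unset Printing Implicit Defensive.
Local Open Scope fset_scope.

Definition name := nat.

Inductive prefix : Type :=
| POut  : name -> name -> prefix
| PIn   : name -> name -> prefix   (* a(x), x bound in the continuation *)
| PAOut : name -> name -> prefix   (* a<<b>> send authorization *)
| PAIn  : name -> name -> prefix.  (* a<<b>> receive authorization, b not bound *)

Inductive proc : Type :=
| Nil  : proc
| Par  : proc -> proc -> proc
| Res  : name -> proc -> proc      (* (nu a) P, a bound *)
| Auth : name -> proc -> proc      (* (a) P, a not bound *)
| Pre  : prefix -> proc -> proc.

Fixpoint fn (P : proc) : {fset nat} :=
  match P with
  | Nil => fset0
  | Par P Q => fn P `|` fn Q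
  | Res a P => fn P `\ a
  | Auth a P => a |` fn P
  | Pre (POut a b) P => [fset a; b] `|` fn P
  | Pre (PAOut a b) P => [fset a; b] `|` fn P
  | Pre (PAIn a b) P => [fset a; b] `|` fn P
  | Pre (PIn a x) P => a |` (fn P `\ x)
  end.

(* Name swapping (transposition of names a and b), used to express
   alpha-conversion without capture issues. *)
Definition swapn (a b n : name) : name :=
  if n == a then b else if n == b then a else n.

Definition swappre (a b : name) (p : prefix) : prefix :=
  match p with
  | POut c d => POut (swapn a b c) (swapn a b d)
  | PIn c d => PIn (swapn a b c) (swapn a b d)
  | PAOut c d => PAOut (swapn a b c) (swapn a b d)
  | PAIn c d => PAIn (swapn a b c) (swapn a b d)
  end.

Fixpoint swap (a b : name) (P : proc) : proc :=
  match P with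
  | Nil => Nil
  | Par P Q => Par (swap a b P) (swap a b Q)
  | Res c P => Res (swapn a b c) (swap a b P)
  | Auth c P => Auth (swapn a b c) (swap a b P)
  | Pre p P => Pre (swappre a b p) (swap a b P)
  end.

(* Structural congruence: the least congruence containing the listed axioms.
   alpha-convertibility is included via its generating axioms (renaming a
   bound name to a fresh one); closure under congruence yields full
   alpha-conversion. *)
Inductive cong : proc -> proc -> Prop :=
| cong_refl P : cong P P
| cong_sym P Q : cong P Q -> cong Q P
| cong_trans P Q R : cong P Q -> cong Q R -> cong P R
| cong_par P P' Q Q' : cong P P' -> cong Q Q' -> cong (Par P Q) (Par P' Q')
| cong_res a P P' : cong P P' -> cong (Res a P) (Res a P')
| cong_auth a P P' : cong P P' -> cong (Auth a P) (Auth a P')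
| cong_pre p P P' : cong P P' -> cong (Pre p P) (Pre p P')
| cong_par0 P : cong (Par P Nil) P
| cong_parC P Q : cong (Par P Q) (Par Q P)
| cong_parA P Q R : cong (Par (Par P Q) R) (Par P (Par Q R))
| cong_res0 a : cong (Res a Nil) Nil
| cong_resC a b P : cong (Res a (Res b P)) (Res b (Res a P))
| cong_scope a P Q : a \notin fn P -> cong (Par P (Res a Q)) (Res a (Par P Q))
| cong_alpha_res a b P : b \notin fn P -> cong (Res a P) (Res b (swap a b P))
| cong_alpha_in a x y P : y \notin fn P ->
    cong (Pre (PIn a x) P) (Pre (PIn a y) (swap x y P))
| cong_authC a b P : cong (Auth a (Auth b P)) (Auth b (Auth a P))
| cong_auth0 a : cong (Auth a Nil) Nil
| cong_authpar a P Q : cong (Auth a (Par P Q)) (Par (Auth a P) (Auth a Q))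
| cong_authres a b P : a != b -> cong (Auth a (Res b P)) (Res b (Auth a P)).

Inductive typed : {fset nat} -> proc -> Prop :=
| t_nil : typed fset0 Nil
| t_par r1 r2 P Q : typed r1 P -> typed r2 Q -> typed (r1 `|` r2) (Par P Q)
| t_res r a P : typed r P -> a \notin r -> typed r (Res a P)
| t_auth r a P : typed r P -> typed (r `\ a) (Auth a P)
| t_out r a b P : typed r P -> typed (r `|` [fset a]) (Pre (POut a b) P)
| t_in r a x P : typed r P -> x \notin r -> typed (r `|` [fset a]) (Pre (PIn a x) P)
| t_aout r a b P : typed r P -> b \notin r ->
    typed (r `|` [fset a; b]) (Pre (PAOut a b) P)
| t_ain r a b P : typed r P -> typed ((r `\ b) `|` [fset a]) (Pre (PAIn a b) P).

(* Main.v *)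
Require Import Defs.
From mathcomp Require Import all_boot finmap.
Set Implicit Arguments. Unset Strict Implicit.
Local Open Scope fset_scope.
Set Warnings "-notation-overridden,-notation-incompatible-prefix".

Lemma swapnK a b n : swapn a b (swapn a b n) = n.
Proof.
rewrite /swapn; case: (eqVneq n a) => [->|na].
  by rewrite eqxx; case: (eqVneq b a) => [->|]; rewrite ?eqxx.
case: (eqVneq n b) => [->|nb]; first by rewrite eqxx.
by rewrite (negPf na) (negPf nb).
Qed.

Lemma eq_swapn a b z c : (z == swapn a b c) = (swapn a b z == c).
Proof. by rewrite -{1}(swapnK a b z) (can_eq (swapnK a b)). Qed.

Lemma swapn_inj a b : injective (swapn a b).
Proof. exact: can_inj (swapnK a b). Qed.

Definition swapset a b (r : {fset nat}) : {fset nat} := [fset swapn a b x | x in r].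

Lemma mem_swapset a b r x : (x \in swapset a b r) = (swapn a b x \in r).
Proof.
by rewrite -{1}(swapnK a b x) /swapset (mem_imfset _ _ (@swapn_inj a b)).
Qed.

Lemma swapset_id a b r : a \notin r -> b \notin r -> swapset a b r = r.
Proof.
move=> ha hb; apply/fsetP => x; rewrite mem_swapset /swapn.
case: (eqVneq x a) => [->|xa]; first by rewrite (negPf ha) (negPf hb).
case: (eqVneq x b) => [->|xb]; first by rewrite (negPf ha) (negPf hb).
by [].
Qed.

Lemma swapK a b P : swap a b (swap a b P) = P.
Proof.
elim: P => //= [P IP Q IQ|c P IP|c P IP|p P IP]; rewrite ?IP ?IQ ?swapnK //.
by case: p => c d /=; rewrite !swapnK.
Qed.

Lemma typed_eq r r' P : typed r P -> r = r' -> typed r' P.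
Proof. by move=> h <-. Qed.

Lemma typed_fn r P : typed r P -> r `<=` fn P.
Proof.
elim=> {r P} /=.
- by [].
- move=> r1 r2 P Q _ h1 _ h2; apply/fsubsetP=> z; rewrite !inE => /orP[].
  + by move/(fsubsetP h1) => ->.
  + by move/(fsubsetP h2) => ->; rewrite orbT.
- move=> r a P _ h ha; apply/fsubsetP=> z zr; rewrite !inE (fsubsetP h _ zr) andbT.
  by apply/eqP=> e; move: ha; rewrite -e zr.
- move=> r a P _ h; apply/fsubsetP=> z; rewrite !inE => /andP[_ zr].
  by rewrite (fsubsetP h _ zr) orbT.
- move=> r a b P _ h; apply/fsubsetP=> z; rewrite !inE => /orP[zr|->//].
  by rewrite (fsubsetP h _ zr) !orbT.
- move=> r a x P _ h hx; apply/fsubsetP=> z; rewrite !inE => /orP[zr|->//].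
  have zx : z != x by apply: contraNneq hx => <-.
  by rewrite zx (fsubsetP h _ zr) orbT.
- move=> r a b P _ h hb; apply/fsubsetP=> z; rewrite !inE => /orP[zr|->//].
  by rewrite (fsubsetP h _ zr) !orbT.
- move=> r a b P _ h; apply/fsubsetP=> z; rewrite !inE => /orP[/andP[_ zr]|->//].
  by rewrite (fsubsetP h _ zr) !orbT.
Qed.

Lemma typed_swap a b r P : typed r P -> typed (swapset a b r) (swap a b P).
Proof.
elim=> {r P} /=.
- by apply: typed_eq; [constructor| apply/fsetP=> z; rewrite mem_swapset !inE].
- move=> r1 r2 P Q _ h1 _ h2; apply: typed_eq; first exact: t_par h1 h2.
  by apply/fsetP=> z; rewrite !(mem_swapset, inE).
- move=> r c P _ h hc; apply: t_res h _; by rewrite mem_swapset swapnK.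
- move=> r c P _ h; apply: typed_eq; first exact: t_auth h.
  by apply/fsetP=> z; rewrite !(mem_swapset, inE) !eq_swapn.
- move=> r c d P _ h; apply: typed_eq; first exact: t_out h.
  by apply/fsetP=> z; rewrite !(mem_swapset, inE) !eq_swapn.
- move=> r c x P _ h hx; apply: typed_eq; first (apply: t_in h _; by rewrite mem_swapset swapnK).
  by apply/fsetP=> z; rewrite !(mem_swapset, inE) !eq_swapn.
- move=> r c d P _ h hd; apply: typed_eq; first (apply: t_aout h _; by rewrite mem_swapset swapnK).
  by apply/fsetP=> z; rewrite !(mem_swapset, inE) !eq_swapn.
- move=> r c d P _ h; apply: typed_eq; first exact: t_ain h.
  by apply/fsetP=> z; rewrite !(mem_swapset, inE) !eq_swapn.
Qed.

Lemma notin_fn r P a : typed r P -> a \notin fn P -> a \notin r.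
Proof. move=> h; apply: contra => ar; move: (typed_fn h) => /fsubsetP; apply. exact: ar. Qed.

Ltac invs H := inversion H; subst; clear H.

Lemma cong_typed P Q : cong P Q -> forall r, (typed r P -> typed r Q) /\ (typed r Q -> typed r P).
Proof.
elim=> {P Q}.
- by [].
- by move=> P Q _ IH r; case: (IH r).
- move=> P Q R _ I1 _ I2 r; case: (I1 r); case: (I2 r); split; auto.
- move=> P P' Q Q' _ I1 _ I2 r; split=> h; invs h.
  + by apply: t_par; [apply: (proj1 (I1 _)) | apply: (proj1 (I2 _))].
  + by apply: t_par; [apply: (proj2 (I1 _)) | apply: (proj2 (I2 _))].
- move=> a P P' _ I r; split=> h; invs h; apply: t_res => //; by case: (I r); auto.
- move=> a P P' _ I r; split=> h; invs h; apply: t_auth; by case: (I r0); auto.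
- move=> p P P' _ I r; split=> h; invs h; constructor => //; by case: (I r0); auto.
- move=> P r; split=> h.
  + by invs h; match goal with H : typed _ Defs.Nil |- _ => invs H end; rewrite fsetU0.
  + by rewrite -[r]fsetU0; constructor => //; constructor.
- move=> P Q r; split=> h; invs h; rewrite fsetUC; by constructor.
- move=> P Q R r; split=> h; invs h.
  + match goal with H : typed _ (Par _ _) |- _ => invs H end.
    by rewrite -fsetUA; constructor => //; constructor.
  + match goal with H : typed _ (Par _ _) |- _ => invs H end.
    by rewrite fsetUA; constructor => //; constructor.
- move=> a r; split=> h.
  + by invs h; match goal with H : typed _ Defs.Nil |- _ => invs H end; constructor.
  + by invs h; constructor => //; constructor.
- move=> a b P r; split=> h; invs h; match goal with H : typed _ (Res _ _) |- _ => invs H end;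
    by apply: t_res => //; apply: t_res.
- move=> a P Q ha r; split=> h.
  + invs h; match goal with H : typed _ (Res _ _) |- _ => invs H end.
    apply: t_res; first by constructor.
    rewrite inE negb_or; apply/andP; split => //; exact: notin_fn ha.
  + invs h; match goal with H : typed _ (Par _ _) |- _ => invs H end.
    move: H3; rewrite inE negb_or => /andP[h1 h2].
    by constructor => //; constructor.
- move=> a b P hb r; split=> h.
  + inversion h as [| |r0 a0 P0 H1 H3 | | | | |]; subst.
    have hbr := notin_fn H1 hb.
    apply: t_res => //. rewrite -(swapset_id H3 hbr); exact: typed_swap.
  + inversion h as [| |r0 a0 P0 H1 H3 | | | | |]; subst.
    have := typed_swap a b H1; rewrite swapK => hs.
    have hb' := notin_fn hs hb.
    move: hb'; rewrite mem_swapset /swapn eqxx => ha.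
    have -> : r = swapset a b r.
      move: hs hb ha H3; by case: (eqVneq b a) => [->|ba] h1 h2 h3 h4; rewrite ?eqxx in h3; rewrite (swapset_id h3 h4).
    by apply: t_res hs _; rewrite mem_swapset /swapn eqxx.
- move=> a x y P hy r; split=> h.
  + inversion h as [| | | | |r0 a0 x0 P0 H2 H4 | |]; subst.
    have hyr := notin_fn H2 hy.
    constructor; last by [].
    rewrite -(swapset_id H4 hyr); exact: typed_swap.
  + inversion h as [| | | | |r0 a0 x0 P0 H2 H4 | |]; subst.
    have := typed_swap x y H2; rewrite swapK => hs.
    have hb' := notin_fn hs hy.
    move: hb'; rewrite mem_swapset /swapn eqxx => ha.
    have e : r0 = swapset x y r0.
      move: hs hy ha H4; by case: (eqVneq y x) => [->|ba] h1 h2 h3 h4; rewrite ?eqxx in h3; rewrite (swapset_id h3 h4).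
    by rewrite e; apply: t_in hs _; rewrite mem_swapset /swapn eqxx.
- move=> a b P r; split=> h; invs h; match goal with H : typed _ (Auth _ _) |- _ => invs H end;
    rewrite fsetDDl fsetUC -fsetDDl; by do 2 constructor.
- move=> a r; split=> h.
  + by invs h; match goal with H : typed _ Defs.Nil |- _ => invs H end; rewrite fset0D; constructor.
  + by invs h; rewrite -(fset0D [fset a]); constructor; constructor.
- move=> a P Q r; split=> h.
  + invs h; match goal with H : typed _ (Par _ _) |- _ => invs H end.
    by rewrite fsetDUl; do 2 constructor.
  + invs h; do 2 match goal with H : typed _ (Auth _ _) |- _ => invs H end.
    by rewrite -fsetDUl; do 2 constructor.
- move=> a b P hab r; split=> h.
  + invs h; match goal with H : typed _ (Res _ _) |- _ => invs H end.
    constructor; first by constructor.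
    by rewrite !inE negb_and; apply/orP; right.
  + invs h; match goal with H : typed _ (Auth _ _) |- _ => invs H end.
    constructor; constructor => //.
    by move: H3; rewrite !inE negb_and eq_sym hab.
Qed.

Theorem mainTheorem4 (rho : {fset nat}) (P Q : proc) :
  typed rho P -> cong P Q -> typed rho Q.
Proof. by move=> h c; case: (cong_typed c rho) => H _; apply: H. Qed.
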